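(* Consider a u-MPS with core tensor $\mathcal{A}$ and boundary vectors $\alpha,\omega\in\mathbb{R}^D$ such that $\mathcal{Z}_*:=\sum_{s\in\Sigma^*}(\alpha^T\mathcal{A}(s)\omega)^2$ is finite and positive, and let $P_*(s)=(\alpha^T\mathcal{A}(s)\omega)^2/\mathcal{Z}_*$ be the induced probability distribution on $\Sigma^*$. Let $R$ be an unambiguous regex whose right transfer operator $\mathcal{E}^r_R$ converges, and suppose $P_*(R):=\sum_{s'\in\mathcal{L}(R)}P_*(s')>0$. Then $\mathrm{SAMPLE}(R,\alpha\alpha^T,\omega\omega^T)$ outputs a random string distributed according to the conditional distribution $P_*(s\mid s\in\mathcal{L}(R))$, i.e. with probability $P_*(s)/P_*(R)$ if $s\in\mathcal{L}(R)$ and $0$ otherwise.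
   Context: A u-MPS over a finite alphabet $\Sigma$ of size $d$ consists of a core tensor $\mathcal{A}$ of shape $(D,d,D)$, assigning to each $c\in\Sigma$ a matrix $\mathcal{A}(c)\in\mathbb{R}^{D\times D}$, and boundary vectors $\alpha,\omega\in\mathbb{R}^D$; for $s=s_1\cdots s_n$, $\mathcal{A}(s)=\mathcal{A}(s_1)\cdots\mathcal{A}(s_n)$, $\mathcal{A}(\varepsilon)=I$. Regex are syntax trees built from characters $c\in\Sigma$, concatenations $R_1R_2$, unions $R_1|R_2$, Kleene closures $S^*$; $\mathcal{L}(R)$ is the set of strings matching $R$. Match counts: $|s|_c=1$ if $s=c$, else $0$; $|s|_{R_1R_2}=\sum_{s_1s_2=s}|s_1|_{R_1}|s_2|_{R_2}$; $|s|_{R_1|R_2}=|s|_{R_1}+|s|_{R_2}$; $|s|_{S^*}=\sum_{n\ge0}\sum_{s_1\cdots s_n=s}\prod_i|s_i|_S$ (the $n=0$ term being $1$ iff $s=\varepsilon$). $R$ is unambiguous if $|s|_R\in\{0,1\}$ for all $s$ (so $\mathcal{L}(R)=\{s:|s|_R=1\}$). Generalized transfer operators: $\mathcal{E}^r_c(Q)=\mathcal{A}(c)Q\mathcal{A}(c)^T$, $\mathcal{E}^\ell_c(Q)=\mathcal{A}(c)^TQ\mathcal{A}(c)$; $\mathcal{E}^r_{R_1R_2}=\mathcal{E}^r_{R_1}\circ\mathcal{E}^r_{R_2}$, $\mathcal{E}^\ell_{R_1R_2}=\mathcal{E}^\ell_{R_2}\circ\mathcal{E}^\ell_{R_1}$;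 unions give sums; $\mathcal{E}^r_{S^*}=\sum_{n\ge0}(\mathcal{E}^r_S)^{\circ n}$, $\mathcal{E}^\ell_{S^*}=\sum_{n\ge0}(\mathcal{E}^\ell_S)^{\circ n}$. A literal string $s$ is treated as the concatenation of its characters, so $\mathcal{E}^\ell_s(Q)=\mathcal{A}(s)^TQ\mathcal{A}(s)$. $\mathcal{E}^r_R$ converges if all Kleene-closure series in its recursive definition converge. $\mathcal{Z}_R(Q_\ell,Q_r)=\mathrm{Tr}(Q_\ell\mathcal{E}^r_R(Q_r))$. The randomized procedure $\mathrm{SAMPLE}(R,Q_\ell,Q_r)$ is defined recursively: (i) if $R=c$, return $c$; (ii) if $R=R_1R_2$, let $s_1=\mathrm{SAMPLE}(R_1,Q_\ell,\mathcal{E}^r_{R_2}(Q_r))$, then $s_2=\mathrm{SAMPLE}(R_2,\mathcal{E}^\ell_{s_1}(Q_\ell),Q_r)$, return $s_1s_2$; (iii) if $R=R_1|R_2$, choose $i\in\{1,2\}$ with probability $\mathcal{Z}_{R_i}(Q_\ell,Q_r)/\mathcal{Z}_{R_1|R_2}(Q_\ell,Q_r)$ and return $\mathrm{SAMPLE}(R_i,Q_\ell,Q_r)$; (iv) if $R=S^*$, with probability $\mathrm{Tr}(Q_\ell Q_r)/\mathcal{Z}_{S^*}(Q_\ell,Q_r)$ return $\varepsilon$, otherwise return $\mathrm{SAMPLE}(SS^*,Q_\ell,Q_r)$. All random choices are independent, and normalization constants encountered are assumed positive. *)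

(* Defs.v *)
From mathcomp Require Import ssreflect ssrfun ssrbool eqtype ssrnat seq choice fintype bigop.
From Stdlib Require Import Reals ClassicalEpsilon.

Set Implicit Arguments.
Unset Strict Implicit.
Unset Printing Implicit Defensive.

Definition vec (D : nat) := 'I_D -> R.
Definition mat (D : nat) := 'I_D -> 'I_D -> R.

Definition rsum (D : nat) (f : 'I_D -> R) : R := \big[Rplus/0%R]_(i < D) f i.

Definition mmul (D : nat) (A B : mat D) : mat D :=
  fun i j => rsum (fun k => (A i k * B k j)%R).
Definition madd (D : nat) (A B : mat D) : mat D := fun i j => (A i j + B i j)%R.
Definition mtr (D : nat) (A : mat D) : mat D := fun i j => A j i.
Definition mid (D : nat) : mat D := fun i j => if i == j then 1%R else 0%R.
Definition trace (D : nat) (A : mat D) : R := rsum (fun i => A i i).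
Definition outer (D : nat) (v : vec D) : mat D := fun i j => (v i * v j)%R.

Definition mps_word (Sigma : finType) (D : nat) (A : Sigma -> mat D) (s : seq Sigma)
  : mat D := foldr (fun c M => mmul (A c) M) (@mid D) s.

Definition amp (Sigma : finType) (D : nat) (A : Sigma -> mat D) (alpha omega : vec D)
  (s : seq Sigma) : R :=
  rsum (fun i => rsum (fun j => (alpha i * mps_word A s i j * omega j)%R)).

Definition words (Sigma : finType) (n : nat) : seq (seq Sigma) :=
  iter n (fun L => [seq c :: w | c <- enum Sigma, w <- L]) [:: [::]].

Inductive regex (Sigma : Type) : Type :=
| Chr of Sigma
| Cat of regex Sigma & regex Sigma
| Alt of regex Sigma & regex Sigma
| Star of regex Sigma.

(* all decompositions s = s_1 ... s_n into n (possibly empty) pieces *)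
Fixpoint splits (Sigma : Type) (n : nat) (s : seq Sigma) : seq (seq (seq Sigma)) :=
  match n with
  | 0 => if s is [::] then [:: [::]] else [::]
  | n'.+1 => [seq take i s :: ws | i <- iota 0 (size s).+1, ws <- splits n' (drop i s)]
  end.

(* Truncated match counts: identical to |s|_R except that every Kleene-closure
   sum over n >= 0 is truncated to n <= N.  These are nondecreasing in N and
   |s|_R (in N u {oo}) is their supremum over N. *)
Fixpoint cnt (Sigma : eqType) (N : nat) (r : regex Sigma) (s : seq Sigma) : nat :=
  match r with
  | Chr c => nat_of_bool (s == [:: c])
  | Cat r1 r2 => \sum_(i < (size s).+1) (cnt N r1 (take i s) * cnt N r2 (drop i s))
  | Alt r1 r2 => cnt N r1 s + cnt N r2 s
  | Star r1 => \sum_(n < N.+1) \sum_(ws <- splits n s) \prod_(w <- ws) cnt N r1 w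
  end.

(* R unambiguous : |s|_R in {0,1} for all s, i.e. sup_N cnt N R s <= 1 *)
Definition unambiguous (Sigma : eqType) (r : regex Sigma) : Prop :=
  forall N s, cnt N r s <= 1.

Definition inL (Sigma : eqType) (r : regex Sigma) (s : seq Sigma) : Prop :=
  exists N, 0 < cnt N r s.

(* classical limit of a real sequence (meaningful when it converges) *)
Definition lim (u : nat -> R) : R := epsilon (inhabits 0%R) (fun l => Un_cv u l).

Definition star_partial (D : nat) (T : mat D -> mat D) (Q : mat D) (i j : 'I_D)
  : nat -> R := fun n => sum_f_R0 (fun k => iter k T Q i j) n.

Fixpoint Er (Sigma : Type) (D : nat) (A : Sigma -> mat D) (r : regex Sigma)
  : mat D -> mat D :=
  match r with
  | Chr c => fun Q => mmul (mmul (A c) Q) (mtr (A c))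
  | Cat r1 r2 => fun Q => Er A r1 (Er A r2 Q)
  | Alt r1 r2 => fun Q => madd (Er A r1 Q) (Er A r2 Q)
  | Star r1 => fun Q i j => lim (star_partial (Er A r1) Q i j)
  end.

(* E^r_R converges: every Kleene-closure series sum_n (E^r_S)^n converges
   (entrywise, for every argument Q; equivalent to operator convergence in
   finite dimension). *)
Fixpoint Er_conv (Sigma : Type) (D : nat) (A : Sigma -> mat D) (r : regex Sigma) : Prop :=
  match r with
  | Chr _ => True
  | Cat r1 r2 => Er_conv A r1 /\ Er_conv A r2
  | Alt r1 r2 => Er_conv A r1 /\ Er_conv A r2
  | Star r1 => Er_conv A r1 /\
      forall (Q : mat D) (i j : 'I_D), exists l, Un_cv (star_partial (Er A r1) Q i j) l
  end.

Definition El_word (Sigma : finType) (D : nat) (A : Sigma -> mat D) (s : seq Sigma)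
  (Q : mat D) : mat D := mmul (mmul (mtr (mps_word A s)) Q) (mps_word A s).

Definition ZR (Sigma : Type) (D : nat) (A : Sigma -> mat D) (r : regex Sigma)
  (Ql Qr : mat D) : R := trace (mmul Ql (Er A r Qr)).

(* samp k R Ql Qr s = probability that SAMPLE(R,Ql,Qr) outputs s along an
   execution in which each chain of Kleene-closure unfoldings has length <= k.
   The probability that SAMPLE(R,Ql,Qr) outputs s is the limit as k -> oo. *)
Fixpoint samp (Sigma : finType) (D : nat) (A : Sigma -> mat D) (k : nat)
  : regex Sigma -> mat D -> mat D -> seq Sigma -> R :=
  fix sr (r : regex Sigma) (Ql Qr : mat D) (s : seq Sigma) {struct r} : R :=
  match r with
  | Chr c => if s == [:: c] then 1%R else 0%R
  | Cat r1 r2 =>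
      \big[Rplus/0%R]_(i < (size s).+1)
        (sr r1 Ql (Er A r2 Qr) (take i s)
         * sr r2 (El_word A (take i s) Ql) Qr (drop i s))%R
  | Alt r1 r2 =>
      (ZR A r1 Ql Qr / ZR A r Ql Qr * sr r1 Ql Qr s
       + ZR A r2 Ql Qr / ZR A r Ql Qr * sr r2 Ql Qr s)%R
  | Star r1 =>
      match k with
      | 0 => 0%R
      | k'.+1 =>
          let pe := (trace (mmul Ql Qr) / ZR A r Ql Qr)%R in
          (pe * (if s is [::] then 1 else 0)
           + (1 - pe) *
             \big[Rplus/0%R]_(i < (size s).+1)
               (sr r1 Ql (Er A r Qr) (take i s)
                * samp A k' r (El_word A (take i s) Ql) Qr (drop i s)))%R
      end
  end.

Definition len_mass (Sigma : finType) (P : seq Sigma -> Prop) (f : seq Sigma -> R)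
  (n : nat) : R :=
  \big[Rplus/0%R]_(w <- words Sigma n)
    (if excluded_middle_informative (P w) then f w else 0%R).

(* Main.v *)
From HB Require Import structures.
Require Import Defs.
From mathcomp Require Import ssreflect ssrfun ssrbool eqtype ssrnat seq choice fintype bigop.
From Stdlib Require Import Reals ClassicalEpsilon Lra Lia FunctionalExtensionality.
From mathcomp Require Import ssrnat seq bigop.
Set Implicit Arguments. Unset Strict Implicit. Unset Printing Implicit Defensive.
Lemma RplusA' : associative Rplus. Proof. move=> x y z; by rewrite Rplus_assoc. Qed.
Lemma RmultA' : associative Rmult. Proof. move=> x y z; by rewrite Rmult_assoc. Qed.
HB.instance Definition _ := Monoid.isComLaw.Build R 0%R Rplus RplusA' Rplus_comm Rplus_0_l.
HB.instance Definition _ := Monoid.isComLaw.Build R 1%R Rmult RmultA' Rmult_comm Rmult_1_l.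
HB.instance Definition _ := Monoid.isMulLaw.Build R 0%R Rmult Rmult_0_l Rmult_0_r.
HB.instance Definition _ := Monoid.isAddLaw.Build R Rmult Rplus Rmult_plus_distr_r Rmult_plus_distr_l.

Local Open Scope R_scope.

Definition mtv (D : nat) (M : mat D) (x : vec D) : vec D :=
  fun j => rsum (fun i => M i j * x i).
Definition qf (D : nat) (x : vec D) (M : mat D) : R :=
  rsum (fun i => rsum (fun j => x i * M i j * x j)).
Definition PSD (D : nat) (M : mat D) : Prop := forall x, 0 <= qf x M.
Definition mzero (D : nat) : mat D := fun _ _ => 0.
Definition mscale (D : nat) (c : R) (M : mat D) : mat D := fun i j => c * M i j.

Lemma rsum_add (D : nat) (f g : 'I_D -> R) : rsum (fun i => f i + g i) = rsum f + rsum g.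
Proof. by rewrite /rsum big_split. Qed.
Lemma rsum_scal (D : nat) (f : 'I_D -> R) c : c * rsum f = rsum (fun i => c * f i).
Proof. by rewrite /rsum big_distrr. Qed.
Lemma rsum_scar (D : nat) (f : 'I_D -> R) c : rsum f * c = rsum (fun i => f i * c).
Proof. by rewrite /rsum big_distrl. Qed.
Lemma rsum_exch (D : nat) (F : 'I_D -> 'I_D -> R) :
  rsum (fun i => rsum (fun j => F i j)) = rsum (fun j => rsum (fun i => F i j)).
Proof. by rewrite /rsum exchange_big. Qed.
Lemma rsum_ext (D : nat) (f g : 'I_D -> R) : (forall i, f i = g i) -> rsum f = rsum g.
Proof. move=> H; rewrite /rsum; apply: eq_bigr => i _; exact: H. Qed.
Lemma rsum0 (D : nat) : rsum (fun _ : 'I_D => 0) = 0.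
Proof. by rewrite /rsum big1. Qed.
Lemma rsum_ge0 (D : nat) (f : 'I_D -> R) : (forall i, 0 <= f i) -> 0 <= rsum f.
Proof. move=> H; rewrite /rsum; apply: (big_ind (fun x => 0 <= x)) => //; [lra | move=> x y; lra]. Qed.
Lemma rsum_le (D : nat) (f g : 'I_D -> R) : (forall i, f i <= g i) -> rsum f <= rsum g.
Proof. move=> H; rewrite /rsum; apply: (big_ind2 (fun x y => x <= y)) => //; [lra | move=> *; lra]. Qed.
Lemma rsum_delta (D : nat) (f : 'I_D -> R) i : rsum (fun k => (if i == k then 1 else 0) * f k) = f i.
Proof.
rewrite /rsum (bigD1 i) //= eqxx big1 ?Rplus_0_r ?Rmult_1_l // => k /negbTE.
by rewrite eq_sym => ->; rewrite Rmult_0_l.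
Qed.
Lemma rsum_delta' (D : nat) (f : 'I_D -> R) j : rsum (fun k => f k * (if k == j then 1 else 0)) = f j.
Proof.
rewrite -(rsum_delta f j); apply: rsum_ext => k; rewrite Rmult_comm; congr (_ * _).
by rewrite eq_sym.
Qed.

Lemma mmulA (D : nat) (X Y Z : mat D) : mmul (mmul X Y) Z = mmul X (mmul Y Z).
Proof.
apply: functional_extensionality => i; apply: functional_extensionality => j.
rewrite /mmul. under [LHS]rsum_ext => k do rewrite rsum_scar.
under [RHS]rsum_ext => k do rewrite rsum_scal.
rewrite rsum_exch; apply: rsum_ext => k; apply: rsum_ext => l; ring.
Qed.
Lemma mmul_mid_l (D : nat) (X : mat D) : mmul (@mid D) X = X.
Proof.
apply: functional_extensionality => i; apply: functional_extensionality => j.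
by rewrite /mmul /mid rsum_delta.
Qed.
Lemma mmul_mid_r (D : nat) (X : mat D) : mmul X (@mid D) = X.
Proof.
apply: functional_extensionality => i; apply: functional_extensionality => j.
by rewrite /mmul /mid rsum_delta'.
Qed.

Lemma Aw_cat (Sigma : finType) (D : nat) (A : Sigma -> mat D) s1 s2 :
  mps_word A (s1 ++ s2) = mmul (mps_word A s1) (mps_word A s2).
Proof.
elim: s1 => [|c s1 IH] /=; first by rewrite mmul_mid_l.
by rewrite IH mmulA.
Qed.

Lemma mtv_mmul (D : nat) (X Y : mat D) x : mtv (mmul X Y) x = mtv Y (mtv X x).
Proof.
apply: functional_extensionality => j; rewrite /mtv /mmul.
under [LHS]rsum_ext => i do rewrite rsum_scar.
rewrite rsum_exch; apply: rsum_ext => k.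
rewrite rsum_scal; apply: rsum_ext => i; ring.
Qed.
Lemma mtv_mid (D : nat) (x : vec D) : mtv (@mid D) x = x.
Proof.
apply: functional_extensionality => j; rewrite /mtv /mid.
rewrite -[RHS](rsum_delta x j); apply: rsum_ext => i.
by rewrite eq_sym.
Qed.

Lemma qf_conj (D : nat) (B Q : mat D) x :
  qf x (mmul (mmul B Q) (mtr B)) = qf (mtv B x) Q.
Proof.
rewrite /qf /mtv /mmul /mtr.
transitivity (rsum (fun i => rsum (fun j => rsum (fun l => rsum (fun k =>
   x i * B i k * Q k l * B j l * x j))))).
  apply: rsum_ext => i; apply: rsum_ext => j.
  rewrite (Rmult_comm (x i)) Rmult_assoc rsum_scar; apply: rsum_ext => l.
  rewrite rsum_scar rsum_scar; apply: rsum_ext => k; ring.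
transitivity (rsum (fun k => rsum (fun l => rsum (fun i => rsum (fun j =>
   x i * B i k * Q k l * B j l * x j))))); last first.
  symmetry; apply: rsum_ext => k; apply: rsum_ext => l.
  rewrite /mtv rsum_scar rsum_scar; apply: rsum_ext => i.
  rewrite rsum_scal; apply: rsum_ext => j; ring.
under rsum_ext => i do under rsum_ext => j do rewrite rsum_exch.
under rsum_ext => i do rewrite rsum_exch.
under rsum_ext => i do under rsum_ext => k do rewrite rsum_exch.
rewrite rsum_exch.
by under rsum_ext => k do rewrite rsum_exch.
Qed.

Lemma trace_outer (D : nat) (v : vec D) M : trace (mmul (outer v) M) = qf v M.
Proof.
rewrite /trace /mmul /outer /qf rsum_exch; apply: rsum_ext => i.
apply: rsum_ext => j; ring.
Qed.

Lemma El_outer (Sigma : finType) (D : nat) (A : Sigma -> mat D) s (v : vec D) :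
  El_word A s (outer v) = outer (mtv (mps_word A s) v).
Proof.
apply: functional_extensionality => i; apply: functional_extensionality => j.
rewrite /El_word /outer /mmul /mtv /mtr rsum_scar.
under [LHS]rsum_ext => l do rewrite rsum_scar.
rewrite rsum_exch; apply: rsum_ext => k; rewrite rsum_scal.
apply: rsum_ext => l; ring.
Qed.

Lemma qf_outer (D : nat) (x w : vec D) : qf x (outer w) = (rsum (fun i => x i * w i)) ^ 2.
Proof.
rewrite /qf /outer /= Rmult_1_r rsum_scar; apply: rsum_ext => i.
rewrite rsum_scal; apply: rsum_ext => j; ring.
Qed.

Lemma amp_eq (Sigma : finType) (D : nat) (A : Sigma -> mat D) alpha omega s :
  amp A alpha omega s = rsum (fun j => mtv (mps_word A s) alpha j * omega j).
Proof.
rewrite /amp /mtv rsum_exch; apply: rsum_ext => j; rewrite rsum_scar.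
apply: rsum_ext => i; ring.
Qed.

Lemma qf_madd (D : nat) x (M N : mat D) : qf x (madd M N) = qf x M + qf x N.
Proof.
rewrite /qf /madd -rsum_add; apply: rsum_ext => i; rewrite -rsum_add.
apply: rsum_ext => j; ring.
Qed.
Lemma qf_mscale (D : nat) x c (M : mat D) : qf x (mscale c M) = c * qf x M.
Proof.
rewrite /qf /mscale rsum_scal; apply: rsum_ext => i; rewrite rsum_scal.
apply: rsum_ext => j; ring.
Qed.
Lemma PSD_outer (D : nat) (w : vec D) : PSD (outer w).
Proof. move=> x; rewrite qf_outer; apply: pow2_ge_0. Qed.

Lemma cv_const c : Un_cv (fun _ => c) c.
Proof. move=> e He; exists 0%N => n _; rewrite /R_dist Rminus_diag Rabs_R0; lra. Qed.

Lemma cv_ext (u v : nat -> R) l : (forall n, u n = v n) -> Un_cv u l -> Un_cv v l.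
Proof. move=> E H e He; case: (H e He) => N HN; exists N => n Hn; rewrite -E; exact: HN. Qed.

Lemma lim_unique u l : Un_cv u l -> lim u = l.
Proof.
move=> H; rewrite /lim; apply: (UL_sequence u); last exact: H.
apply: (epsilon_spec (inhabits 0) (fun l => Un_cv u l)); by exists l.
Qed.

Lemma bigR_cv (I : Type) (s : seq I) (P : pred I) (u : I -> nat -> R) (l : I -> R) :
  (forall i, Un_cv (u i) (l i)) ->
  Un_cv (fun n => \big[Rplus/0]_(i <- s | P i) u i n) (\big[Rplus/0]_(i <- s | P i) l i).
Proof.
move=> H; elim: s => [|a s IH].
  rewrite big_nil; apply: cv_ext (cv_const 0) => n; by rewrite big_nil.
rewrite big_cons; case Pa: (P a).
  apply: cv_ext (CV_plus _ _ _ _ (H a) IH) => n; by rewrite big_cons Pa.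
by apply: cv_ext IH => n; rewrite big_cons Pa.
Qed.

Lemma rsum_cv (D : nat) (u : 'I_D -> nat -> R) (l : 'I_D -> R) :
  (forall i, Un_cv (u i) (l i)) -> Un_cv (fun n => rsum (fun i => u i n)) (rsum l).
Proof. exact: bigR_cv. Qed.

Lemma cv_scal c u l : Un_cv u l -> Un_cv (fun n => c * u n) (c * l).
Proof. move=> H; exact: CV_mult (cv_const c) H. Qed.

Lemma qf_cv (D : nat) (x : vec D) (M : nat -> mat D) (L : mat D) :
  (forall i j, Un_cv (fun n => M n i j) (L i j)) ->
  Un_cv (fun n => qf x (M n)) (qf x L).
Proof.
move=> H; apply: rsum_cv => i; apply: rsum_cv => j.
have -> : x i * L i j * x j = x j * (x i * L i j) by ring.
apply: cv_ext (cv_scal (x j) (cv_scal (x i) (H i j))) => n; ring.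
Qed.

Lemma cv_ge0 u l : (forall n, 0 <= u n) -> Un_cv u l -> 0 <= l.
Proof. move=> H Hc; exact: (Rle_cv_lim (Un := fun _ => 0) H (cv_const 0) Hc). Qed.

Lemma mmul_addr (D : nat) (X P Q : mat D) : mmul X (madd P Q) = madd (mmul X P) (mmul X Q).
Proof.
apply: functional_extensionality => i; apply: functional_extensionality => j.
rewrite /mmul /madd -rsum_add; apply: rsum_ext => k; ring.
Qed.
Lemma mmul_addl (D : nat) (X P Q : mat D) : mmul (madd P Q) X = madd (mmul P X) (mmul Q X).
Proof.
apply: functional_extensionality => i; apply: functional_extensionality => j.
rewrite /mmul /madd -rsum_add; apply: rsum_ext => k; ring.
Qed.
Lemma mmul_scalr (D : nat) (X P : mat D) c : mmul X (mscale c P) = mscale c (mmul X P).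
Proof.
apply: functional_extensionality => i; apply: functional_extensionality => j.
rewrite /mmul /mscale rsum_scal; apply: rsum_ext => k; ring.
Qed.
Lemma mmul_scall (D : nat) (X P : mat D) c : mmul (mscale c P) X = mscale c (mmul P X).
Proof.
apply: functional_extensionality => i; apply: functional_extensionality => j.
rewrite /mmul /mscale rsum_scal; apply: rsum_ext => k; ring.
Qed.

Lemma Er_star_cv (Sigma : Type) (D : nat) (A : Sigma -> mat D) r1 Q i j :
  Er_conv A (Star r1) ->
  Un_cv (star_partial (Er A r1) Q i j) (Er A (Star r1) Q i j).
Proof.
move=> [_ H]; case: (H Q i j) => l Hl /=; by rewrite (lim_unique Hl).
Qed.

Lemma sum_f_R0_plus (f g : nat -> R) n :
  sum_f_R0 (fun k => f k + g k) n = sum_f_R0 f n + sum_f_R0 g n.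
Proof. elim: n => [|n IH] /=; [done | rewrite IH; ring]. Qed.
Lemma sum_f_R0_scal (f : nat -> R) c n :
  sum_f_R0 (fun k => c * f k) n = c * sum_f_R0 f n.
Proof. elim: n => [|n IH] /=; [done | rewrite IH; ring]. Qed.

Lemma Er_lin (Sigma : Type) (D : nat) (A : Sigma -> mat D) r :
  Er_conv A r ->
  (forall P Q, Er A r (madd P Q) = madd (Er A r P) (Er A r Q)) /\
  (forall c Q, Er A r (mscale c Q) = mscale c (Er A r Q)).
Proof.
elim: r => [c|r1 IH1 r2 IH2|r1 IH1 r2 IH2|r1 IH1] /=.
- move=> _; split => *.
    by rewrite mmul_addr mmul_addl.
  by rewrite mmul_scalr mmul_scall.
- move=> [H1 H2]; case: (IH1 H1) => a1 s1; case: (IH2 H2) => a2 s2; split => *.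
    by rewrite a2 a1.
  by rewrite s2 s1.
- move=> [H1 H2]; case: (IH1 H1) => a1 s1; case: (IH2 H2) => a2 s2; split => *.
    rewrite a1 a2 /madd; apply: functional_extensionality => i;
    apply: functional_extensionality => j; ring.
  rewrite s1 s2 /madd /mscale; apply: functional_extensionality => i;
  apply: functional_extensionality => j; ring.
- move=> Hc; have [H1 H] := Hc; case: (IH1 H1) => a1 s1.
  have itA : forall k P Q, iter k (Er A r1) (madd P Q) = madd (iter k (Er A r1) P) (iter k (Er A r1) Q).
    by move=> k P Q; elim: k => [|k IH] //=; rewrite IH a1.
  have itS : forall k c Q, iter k (Er A r1) (mscale c Q) = mscale c (iter k (Er A r1) Q).
    by move=> k c Q; elim: k => [|k IH] //=; rewrite IH s1.
  split => [P Q|c Q]; apply: functional_extensionality => i; apply: functional_extensionality => j.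
    rewrite /madd; apply: lim_unique.
    have := CV_plus _ _ _ _ (@Er_star_cv _ _ _ _ P i j Hc) (@Er_star_cv _ _ _ _ Q i j Hc).
    apply: cv_ext => n; rewrite /star_partial -sum_f_R0_plus.
    by apply: sum_eq => k _; rewrite itA.
  rewrite /mscale; apply: lim_unique.
  have := cv_scal c (@Er_star_cv _ _ _ _ Q i j Hc).
  apply: cv_ext => n; rewrite /star_partial -sum_f_R0_scal.
  by apply: sum_eq => k _; rewrite itS.
Qed.

Definition Eab (D : nat) (a b : 'I_D) : mat D := fun i j => if (i == a) && (j == b) then 1 else 0.
Definition msum (D : nat) (F : 'I_D -> mat D) : mat D := \big[@madd D/@mzero D]_(a < D) F a.

Lemma msum_entry (D : nat) (F : 'I_D -> mat D) i j : msum F i j = rsum (fun a => F a i j).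
Proof.
rewrite /msum /rsum.
by apply: (big_morph (fun M : mat D => M i j) (id1 := 0) (op1 := Rplus)).
Qed.

Lemma mat_decomp (D : nat) (M : mat D) :
  M = msum (fun a => msum (fun b => mscale (M a b) (Eab a b))).
Proof.
apply: functional_extensionality => i; apply: functional_extensionality => j.
rewrite msum_entry; under rsum_ext => a do rewrite msum_entry.
rewrite /mscale /Eab.
transitivity (rsum (fun a => (if i == a then 1 else 0) * M a j)); first by rewrite rsum_delta.
apply: rsum_ext => a; transitivity (M a j * (if i == a then 1 else 0)); first ring.
rewrite -(rsum_delta' (fun b => M a b * (if (i == a) then 1 else 0)) j).
apply: rsum_ext => b; rewrite [j == b]eq_sym; case: (i == a); case: (b == j) => /=; ring.
Qed.

Lemma lin_decomp (D : nat) (f : mat D -> mat D) :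
  (forall P Q, f (madd P Q) = madd (f P) (f Q)) ->
  (forall c Q, f (mscale c Q) = mscale c (f Q)) ->
  forall M i j, f M i j = rsum (fun a => rsum (fun b => M a b * f (Eab a b) i j)).
Proof.
move=> Ha Hs.
have H0 : f (@mzero D) = @mzero D.
  have -> : @mzero D = mscale 0 (@mzero D).
    apply: functional_extensionality => i; apply: functional_extensionality => j.
    rewrite /mscale /mzero; ring.
  rewrite Hs; apply: functional_extensionality => i; apply: functional_extensionality => j.
  rewrite /mscale /mzero; ring.
have Hm : forall F, f (msum F) = msum (fun a => f (F a)).
  move=> F; rewrite /msum.
  by apply: (big_morph f (id1 := @mzero D) (op1 := @madd D)).
move=> M i j; rewrite {1}(mat_decomp M) Hm msum_entry; apply: rsum_ext => a.
rewrite Hm msum_entry; apply: rsum_ext => b; by rewrite Hs.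
Qed.

Lemma Er_cont (Sigma : Type) (D : nat) (A : Sigma -> mat D) r (M : nat -> mat D) (L : mat D) :
  Er_conv A r -> (forall i j, Un_cv (fun n => M n i j) (L i j)) ->
  forall i j, Un_cv (fun n => Er A r (M n) i j) (Er A r L i j).
Proof.
move=> Hc HM i j; have [Ha Hs] := Er_lin Hc.
rewrite (lin_decomp Ha Hs).
apply: cv_ext; first by move=> n; rewrite (lin_decomp Ha Hs (M n)).
apply: rsum_cv => a; apply: rsum_cv => b.
exact: CV_mult (HM a b) (cv_const _).
Qed.

Definition Pm (D : nat) (E : mat D -> mat D) (Q : mat D) (n : nat) : mat D :=
  fun i j => star_partial E Q i j n.

Lemma Pm_S (D : nat) (E : mat D -> mat D) Q n :
  (forall P Q, E (madd P Q) = madd (E P) (E Q)) ->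
  Pm E Q n.+1 = madd Q (E (Pm E Q n)).
Proof.
move=> Ha; elim: n => [|n IH].
  have -> : Pm E Q 0 = Q by [].
  by [].
have -> : Pm E Q n.+2 = madd (Pm E Q n.+1) (iter n.+2 E Q) by [].
have e : Pm E Q n.+1 = madd (Pm E Q n) (iter n.+1 E Q) by [].
rewrite {2}e Ha IH; have -> : iter n.+2 E Q = E (iter n.+1 E Q) by [].
rewrite /madd; apply: functional_extensionality => i; apply: functional_extensionality => j.
ring.
Qed.

Lemma qf_Pm (D : nat) (E : mat D -> mat D) Q x n :
  qf x (Pm E Q n) = sum_f_R0 (fun k => qf x (iter k E Q)) n.
Proof.
elim: n => [|n IH] //=.
have -> : Pm E Q n.+1 = madd (Pm E Q n) (iter n.+1 E Q) by [].
by rewrite qf_madd IH.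
Qed.

Lemma cv_shift u l : Un_cv u l -> Un_cv (fun n => u n.+1) l.
Proof. move=> H e He; case: (H e He) => N HN; exists N => n Hn; apply: HN; lia. Qed.

Lemma Er_PSD (Sigma : Type) (D : nat) (A : Sigma -> mat D) r :
  Er_conv A r -> forall Q, PSD Q -> PSD (Er A r Q).
Proof.
elim: r => [c|r1 IH1 r2 IH2|r1 IH1 r2 IH2|r1 IH1] /=.
- by move=> _ Q HQ x; rewrite qf_conj.
- by move=> [H1 H2] Q HQ; apply: IH1 => //; apply: IH2.
- by move=> [H1 H2] Q HQ x; rewrite qf_madd; have := IH1 H1 Q HQ x; have := IH2 H2 Q HQ x; lra.
- move=> Hc Q HQ x; have [H1 _] := Hc.
  have Hit : forall k, PSD (iter k (Er A r1) Q).
    by elim=> [|k IH] //=; apply: IH1.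
  have := qf_cv x (M := Pm (Er A r1) Q) (L := Er A (Star r1) Q).
  move=> /(_ (fun i j => @Er_star_cv _ _ _ _ Q i j Hc)) Hcv.
  apply: (cv_ge0 _ Hcv) => n; rewrite qf_Pm.
  by apply: cond_pos_sum => k; apply: Hit.
Qed.

Lemma Er_star_fix (Sigma : Type) (D : nat) (A : Sigma -> mat D) r1 Q :
  Er_conv A (Star r1) ->
  Er A (Star r1) Q = madd Q (Er A r1 (Er A (Star r1) Q)).
Proof.
move=> Hc; have [H1 _] := Hc; have [Ha _] := Er_lin H1.
apply: functional_extensionality => i; apply: functional_extensionality => j.
have Hcv : forall i j, Un_cv (fun n => Pm (Er A r1) Q n i j) (Er A (Star r1) Q i j).
  move=> a b; exact: Er_star_cv.
have H2 := Er_cont H1 Hcv i j.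
have H3 := CV_plus _ _ _ _ (cv_const (Q i j)) H2.
apply: (UL_sequence (fun n => Pm (Er A r1) Q n.+1 i j)).
  exact: cv_shift (Hcv i j).
by apply: cv_ext H3 => n; rewrite Pm_S.
Qed.

Local Open Scope nat_scope.

Fixpoint ck (Sigma : eqType) (k : nat) : regex Sigma -> seq Sigma -> nat :=
  fix cr (r : regex Sigma) (s : seq Sigma) {struct r} : nat :=
  match r with
  | Chr c => nat_of_bool (s == [:: c])
  | Cat r1 r2 => \sum_(0 <= i < (size s).+1) (cr r1 (take i s) * cr r2 (drop i s))
  | Alt r1 r2 => cr r1 s + cr r2 s
  | Star r1 => match k with
               | 0 => 0
               | k'.+1 => nat_of_bool (s == [::]) +
                   \sum_(0 <= i < (size s).+1) (cr r1 (take i s) * ck k' r (drop i s))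
               end
  end.


Lemma ck_Chr (Sigma : eqType) k (c : Sigma) s : ck k (Chr c) s = nat_of_bool (s == [:: c]).
Proof. by case: k. Qed.
Lemma ck_Cat (Sigma : eqType) k (r1 r2 : regex Sigma) s :
  ck k (Cat r1 r2) s = \sum_(0 <= i < (size s).+1) (ck k r1 (take i s) * ck k r2 (drop i s)).
Proof. by case: k. Qed.
Lemma ck_Alt (Sigma : eqType) k (r1 r2 : regex Sigma) s : ck k (Alt r1 r2) s = ck k r1 s + ck k r2 s.
Proof. by case: k. Qed.
Lemma ck_Star0 (Sigma : eqType) (r1 : regex Sigma) s : ck 0 (Star r1) s = 0.
Proof. by []. Qed.
Lemma ck_StarS (Sigma : eqType) k (r1 : regex Sigma) s :
  ck k.+1 (Star r1) s = nat_of_bool (s == [::]) +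
     \sum_(0 <= i < (size s).+1) (ck k.+1 r1 (take i s) * ck k (Star r1) (drop i s)).
Proof. by []. Qed.
Lemma cnt_Cat (Sigma : eqType) N (r1 r2 : regex Sigma) s :
  cnt N (Cat r1 r2) s = \sum_(i < (size s).+1) (cnt N r1 (take i s) * cnt N r2 (drop i s)).
Proof. by []. Qed.
Lemma cnt_Alt (Sigma : eqType) N (r1 r2 : regex Sigma) s : cnt N (Alt r1 r2) s = cnt N r1 s + cnt N r2 s.
Proof. by []. Qed.
Lemma cnt_Chr (Sigma : eqType) N (c : Sigma) s : cnt N (Chr c) s = nat_of_bool (s == [:: c]).
Proof. by []. Qed.

Lemma ck_mono1 (Sigma : eqType) (r : regex Sigma) k s : ck k r s <= ck k.+1 r s.
Proof.
elim: r k s => [c|r1 IH1 r2 IH2|r1 IH1 r2 IH2|r1 IH1] k s.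
- by rewrite !ck_Chr.
- by rewrite !ck_Cat; apply: leq_sum => i _; apply: leq_mul.
- by rewrite !ck_Alt; apply: leq_add.
- elim: k s => [|k IHk] s; first by rewrite ck_Star0.
  rewrite ck_StarS [X in _ <= X]ck_StarS; apply: leq_add => //; apply: leq_sum => i _; apply: leq_mul; [exact: IH1 | exact: IHk].
Qed.

Lemma ck_mono (Sigma : eqType) (r : regex Sigma) k k' s : k <= k' -> ck k r s <= ck k' r s.
Proof.
move=> H; rewrite -(subnKC H); elim: (k' - k) => [|m IH]; first by rewrite addn0.
by rewrite addnS; apply: leq_trans IH (ck_mono1 _ _ _).
Qed.

Definition Tsp (Sigma : Type) (g : seq Sigma -> nat) (n : nat) (s : seq Sigma) : nat :=
  \sum_(ws <- splits n s) \prod_(w <- ws) g w.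

Lemma Tsp0 (Sigma : eqType) (g : seq Sigma -> nat) s : Tsp g 0 s = nat_of_bool (s == [::]).
Proof. by case: s => [|c s]; rewrite /Tsp /= ?big_cons ?big_nil. Qed.

Lemma TspS (Sigma : Type) (g : seq Sigma -> nat) n s :
  Tsp g n.+1 s = \sum_(0 <= i < (size s).+1) (g (take i s) * Tsp g n (drop i s)).
Proof.
rewrite /Tsp.
have -> : splits n.+1 s = [seq take i s :: ws | i <- iota 0 (size s).+1, ws <- splits n (drop i s)] by [].
rewrite big_allpairs_dep /index_iota subn0; apply: eq_bigr => i _.
rewrite big_distrr /=; apply: eq_bigr => ws _; by rewrite big_cons.
Qed.

Lemma cnt_star (Sigma : eqType) N (r1 : regex Sigma) s :
  cnt N (Star r1) s = \sum_(n < N.+1) Tsp (cnt N r1) n s.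
Proof. by []. Qed.

Lemma ck_le_cnt (Sigma : eqType) (r : regex Sigma) k N s : k <= N -> ck k r s <= cnt N r s.
Proof.
elim: r k s => [c|r1 IH1 r2 IH2|r1 IH1 r2 IH2|r1 IH1] k s Hk.
- by rewrite ck_Chr cnt_Chr.
- rewrite ck_Cat cnt_Cat big_mkord; apply: leq_sum => i _; apply: leq_mul; [exact: IH1 | exact: IH2].
- by rewrite ck_Alt cnt_Alt; apply: leq_add; [exact: IH1 | exact: IH2].
- rewrite cnt_star.
  have H : forall j s, j <= N -> ck j (Star r1) s <= \sum_(n < j.+1) Tsp (cnt N r1) n s.
    elim=> [|j IHj] s' Hj; first by rewrite ck_Star0.
    rewrite ck_StarS big_ord_recl Tsp0; apply: leq_add => //.
    under [X in _ <= X]eq_bigr => n _ do rewrite TspS.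
    rewrite exchange_big; apply: leq_sum => i _.
    rewrite -big_distrr; apply: leq_mul; first by apply: IH1.
    by apply: IHj; apply: ltnW.
  apply: leq_trans (H k s Hk) _.
  rewrite -!(big_mkord xpredT (fun n => Tsp (cnt N r1) n s)).
  rewrite [X in _ <= X](big_cat_nat _ (n := k.+1)) //; exact: leq_addr.
Qed.

Lemma cnt_le_ck (Sigma : eqType) (r : regex Sigma) N :
  exists K, forall s, cnt N r s <= ck K r s.
Proof.
elim: r => [c|r1 [K1 H1] r2 [K2 H2]|r1 [K1 H1] r2 [K2 H2]|r1 [K1 H1]].
- by exists 0 => s; rewrite ck_Chr cnt_Chr.
- exists (maxn K1 K2) => s; rewrite ck_Cat cnt_Cat big_mkord; apply: leq_sum => i _; apply: leq_mul.
    by apply: leq_trans (H1 _) (ck_mono _ _ (leq_maxl _ _)).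
  by apply: leq_trans (H2 _) (ck_mono _ _ (leq_maxr _ _)).
- exists (maxn K1 K2) => s; rewrite ck_Alt cnt_Alt; apply: leq_add.
    by apply: leq_trans (H1 _) (ck_mono _ _ (leq_maxl _ _)).
  by apply: leq_trans (H2 _) (ck_mono _ _ (leq_maxr _ _)).
- have H : forall j s, \sum_(n < j) Tsp (cnt N r1) n s <= ck (K1 + j) (Star r1) s.
    elim=> [|j IHj] s; first by rewrite big_ord0.
    rewrite big_ord_recl Tsp0 addnS ck_StarS; apply: leq_add => //.
    under [X in X <= _]eq_bigr => n _ do rewrite TspS.
    rewrite exchange_big; apply: leq_sum => i _.
    rewrite -big_distrr; apply: leq_mul; last exact: IHj.
    apply: leq_trans (H1 _) (ck_mono _ _ _); apply: leq_trans (leq_addr j K1) _; exact: leqnSn.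
  exists (K1 + N.+1) => s; rewrite cnt_star; exact: H.
Qed.

Lemma ck_limit (Sigma : eqType) (r : regex Sigma) s :
  unambiguous r ->
  (inL r s -> exists K, forall k, K <= k -> ck k r s = 1) /\
  (~ inL r s -> forall k, ck k r s = 0).
Proof.
move=> Hu; have Hle : forall k, ck k r s <= 1.
  move=> k; apply: leq_trans (ck_le_cnt _ _ (leqnn k)) _; exact: Hu.
split.
  move=> [N HN]; have [K HK] := cnt_le_ck r N; exists K => k Hk.
  apply/eqP; rewrite eqn_leq Hle /=; apply: leq_trans HN _.
  by apply: leq_trans (HK s) (ck_mono _ _ Hk).
move=> HnL k; apply/eqP; rewrite -leqn0; apply: leq_trans (ck_le_cnt _ _ (leqnn k)) _.
rewrite leqn0; apply/negPn/negP => Hne; apply: HnL; exists k.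
by rewrite lt0n.
Qed.

Local Open Scope R_scope.

Lemma bigR_ge0 (I : Type) (r : seq I) (P : pred I) (F : I -> R) :
  (forall i, P i -> 0 <= F i) -> 0 <= \big[Rplus/0]_(i <- r | P i) F i.
Proof. move=> H; apply: (big_ind (fun x => 0 <= x)) => //; [lra | move=> x y; lra]. Qed.
Lemma bigR_le (I : Type) (r : seq I) (P : pred I) (F G : I -> R) :
  (forall i, P i -> F i <= G i) ->
  \big[Rplus/0]_(i <- r | P i) F i <= \big[Rplus/0]_(i <- r | P i) G i.
Proof. move=> H; apply: (big_ind2 (fun x y => x <= y)) => //; [lra | move=> *; lra]. Qed.
Lemma bigR_le_seq (I : eqType) (r : seq I) (F G : I -> R) :
  (forall i, i \in r -> F i <= G i) ->
  \big[Rplus/0]_(i <- r) F i <= \big[Rplus/0]_(i <- r) G i.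
Proof. move=> H; rewrite big_seq_cond [X in _ <= X]big_seq_cond; apply: bigR_le => i /andP [Hi _]; exact: H. Qed.
Lemma bigR_prefix (F : nat -> R) m n : (m <= n)%N -> (forall j, 0 <= F j) ->
  \big[Rplus/0]_(0 <= j < m) F j <= \big[Rplus/0]_(0 <= j < n) F j.
Proof.
move=> Hmn H; rewrite [X in _ <= X](big_cat_nat _ (n := m)) //=.
have := @bigR_ge0 _ (index_iota m n) xpredT F (fun j _ => H j); lra.
Qed.
Lemma bigR_single (I : eqType) (r : seq I) (F : I -> R) x :
  x \in r -> (forall i, 0 <= F i) -> F x <= \big[Rplus/0]_(i <- r) F i.
Proof.
move=> Hx H; rewrite (big_rem x Hx) /=.
have := @bigR_ge0 _ (rem x r) xpredT F (fun j _ => H j); lra.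
Qed.

Lemma INR_addn m n : INR (m + n) = INR m + INR n.
Proof. exact: plus_INR. Qed.
Lemma INR_muln m n : INR (m * n) = INR m * INR n.
Proof. exact: mult_INR. Qed.
Lemma INR_big (I : Type) (r : seq I) (P : pred I) (f : I -> nat) :
  INR (\sum_(i <- r | P i) f i) = \big[Rplus/0]_(i <- r | P i) INR (f i).
Proof. by apply: (big_morph INR (id1 := 0) (op1 := Rplus)) => // x y; rewrite INR_addn. Qed.

Lemma wordsS (Sigma : finType) n :
  words Sigma n.+1 = [seq c :: w | c <- enum Sigma, w <- words Sigma n].
Proof. by []. Qed.

Lemma size_words (Sigma : finType) n s : s \in words Sigma n -> size s = n.
Proof.
elim: n s => [|n IH] s; first by rewrite /words /= inE => /eqP ->.
rewrite wordsS => /allpairsP [[c w] [/= _ Hw ->]] /=; by rewrite (IH _ Hw).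
Qed.

Lemma words_mem (Sigma : finType) s : s \in words Sigma (size s).
Proof.
elim: s => [|c s IH]; first by rewrite /words /= inE.
by rewrite (_ : size (c :: s) = (size s).+1) // wordsS; apply: allpairs_f => //; rewrite mem_enum.
Qed.

Lemma big_words_cat (Sigma : finType) a b (F : seq Sigma -> R) :
  \big[Rplus/0]_(s <- words Sigma (a + b)) F s =
  \big[Rplus/0]_(s1 <- words Sigma a) \big[Rplus/0]_(s2 <- words Sigma b) F (s1 ++ s2).
Proof.
elim: a F => [|a IH] F.
  by rewrite add0n /words /= big_cons big_nil Rplus_0_r.
rewrite addSn !wordsS !big_allpairs_dep; apply: eq_bigr => c _.
by rewrite (IH (fun w => F (c :: w))).
Qed.

Lemma big_words_split (Sigma : finType) i n (G : seq Sigma -> R) : (i <= n)%N ->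
  \big[Rplus/0]_(s <- words Sigma n) G s =
  \big[Rplus/0]_(s1 <- words Sigma i) \big[Rplus/0]_(s2 <- words Sigma (n - i)) G (s1 ++ s2).
Proof. move=> H; by rewrite -big_words_cat subnKC. Qed.

Definition LS (Sigma : finType) (g : seq Sigma -> nat) (L : nat) (F : seq Sigma -> R) : R :=
  \big[Rplus/0]_(0 <= n < L) \big[Rplus/0]_(s <- words Sigma n) (INR (g s) * F s).

Definition catcount (Sigma : Type) (g1 g2 : seq Sigma -> nat) (s : seq Sigma) : nat :=
  \sum_(0 <= i < (size s).+1) (g1 (take i s) * g2 (drop i s)).

Lemma LS_ge0 (Sigma : finType) g L (F : seq Sigma -> R) : (forall s, 0 <= F s) -> 0 <= LS g L F.
Proof.
move=> H; apply: bigR_ge0 => n _; apply: bigR_ge0 => s _.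
apply: Rmult_le_pos => //; exact: pos_INR.
Qed.
Lemma LS_monoF (Sigma : finType) g L (F G : seq Sigma -> R) :
  (forall s, F s <= G s) -> LS g L F <= LS g L G.
Proof.
move=> H; apply: bigR_le => n _; apply: bigR_le => s _.
apply: Rmult_le_compat_l => //; exact: pos_INR.
Qed.
Lemma LS_monog (Sigma : finType) g g' L (F : seq Sigma -> R) :
  (forall s, 0 <= F s) -> (forall s, (g s <= g' s)%N) -> LS g L F <= LS g' L F.
Proof.
move=> HF H; apply: bigR_le => n _; apply: bigR_le => s _.
apply: Rmult_le_compat_r => //; apply: le_INR; apply/leP; exact: H.
Qed.
Lemma LS_monoL (Sigma : finType) g L L' (F : seq Sigma -> R) :
  (forall s, 0 <= F s) -> (L <= L')%N -> LS g L F <= LS g L' F.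
Proof.
move=> HF H; apply: bigR_prefix => // n; apply: bigR_ge0 => s _.
apply: Rmult_le_pos => //; exact: pos_INR.
Qed.
Lemma LS_add (Sigma : finType) g1 g2 L (F : seq Sigma -> R) :
  LS (fun s => g1 s + g2 s)%N L F = LS g1 L F + LS g2 L F.
Proof.
rewrite /LS -big_split /=; apply: eq_bigr => n _; rewrite -big_split /=; apply: eq_bigr => s _.
rewrite INR_addn; ring.
Qed.
Lemma LS_lin (Sigma : finType) g L (F G : seq Sigma -> R) a b :
  LS g L (fun s => a * F s + b * G s) = a * LS g L F + b * LS g L G.
Proof.
rewrite /LS !big_distrr -big_split /=; apply: eq_bigr => n _.
rewrite !big_distrr -big_split /=; apply: eq_bigr => s _; ring.
Qed.
Lemma LS_ext (Sigma : finType) g L (F G : seq Sigma -> R) :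
  (forall s, F s = G s) -> LS g L F = LS g L G.
Proof. move=> H; rewrite /LS; apply: eq_bigr => n _; apply: eq_bigr => s _; by rewrite H. Qed.
Lemma LS_single (Sigma : finType) g L (F : seq Sigma -> R) s :
  (forall s, 0 <= F s) -> (size s < L)%N -> INR (g s) * F s <= LS g L F.
Proof.
move=> HF HL; apply: Rle_trans (_ : \big[Rplus/0]_(s' <- words Sigma (size s)) (INR (g s') * F s') <= _).
  apply: (bigR_single (F := fun s' => INR (g s') * F s')); first exact: words_mem.
  move=> s'; apply: Rmult_le_pos => //; exact: pos_INR.
rewrite /LS (big_cat_nat _ (n := size s)) //=; last exact: ltnW.
rewrite (@big_ltn _ _ _ (size s) L) //=.
have Hp : forall n, 0 <= \big[Rplus/0]_(s' <- words Sigma n) (INR (g s') * F s').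
  move=> n; apply: bigR_ge0 => s' _; apply: Rmult_le_pos => //; exact: pos_INR.
have := @bigR_ge0 _ (index_iota 0 (size s)) xpredT _ (fun n _ => Hp n).
have := @bigR_ge0 _ (index_iota (size s).+1 L) xpredT _ (fun n _ => Hp n).
lra.
Qed.

Lemma catsum_n (Sigma : finType) (g1 g2 : seq Sigma -> nat) (F : seq Sigma -> R) n :
  \big[Rplus/0]_(s <- words Sigma n) (INR (catcount g1 g2 s) * F s) =
  \big[Rplus/0]_(0 <= i < n.+1) \big[Rplus/0]_(s1 <- words Sigma i)
     \big[Rplus/0]_(s2 <- words Sigma (n - i)) (INR (g1 s1) * INR (g2 s2) * F (s1 ++ s2)).
Proof.
rewrite (@eq_big_seq R 0 Rplus _ (words Sigma n) _ (fun s => \big[Rplus/0]_(0 <= i < n.+1)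
            (INR (g1 (take i s)) * INR (g2 (drop i s)) * F s))); last first.
  move=> s Hs; rewrite /catcount (size_words Hs) INR_big big_distrl.
  by apply: eq_bigr => i _; rewrite INR_muln.
rewrite exchange_big; apply: eq_big_nat => i /andP [_ Hi].
rewrite (big_words_split (i := i) (n := n)) //; apply: eq_big_seq => s1 Hs1; apply: eq_bigr => s2 _.
by rewrite take_size_cat ?drop_size_cat // (size_words Hs1).
Qed.

Lemma diag_reindex (a : nat -> nat -> R) L :
  \big[Rplus/0]_(0 <= n < L) \big[Rplus/0]_(0 <= i < n.+1) a i (n - i)%N =
  \big[Rplus/0]_(0 <= i < L) \big[Rplus/0]_(0 <= j < L - i) a i j.
Proof.
elim: L => [|L IH]; first by rewrite !big_geq.
rewrite big_nat_recr //= IH.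
rewrite [RHS](@eq_big_nat R 0 Rplus 0 L.+1 _ (fun i => \big[Rplus/0]_(0 <= j < L - i) a i j + a i (L - i)%N)); last first.
  move=> i /andP [_ Hi]; rewrite subSn // big_nat_recr //.
rewrite big_split /= [X in _ = X + _]big_nat_recr //= subnn (@big_geq _ _ _ 0 0) //.
by rewrite Rplus_0_r.
Qed.

Lemma diag_le1 (a : nat -> nat -> R) L : (forall i j, 0 <= a i j) ->
  \big[Rplus/0]_(0 <= i < L) \big[Rplus/0]_(0 <= j < L - i) a i j <=
  \big[Rplus/0]_(0 <= i < L) \big[Rplus/0]_(0 <= j < L) a i j.
Proof. move=> H; apply: bigR_le => i _; apply: bigR_prefix => //; exact: leq_subr. Qed.

Lemma diag_le2 (a : nat -> nat -> R) L1 L2 : (forall i j, 0 <= a i j) ->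
  \big[Rplus/0]_(0 <= i < L1) \big[Rplus/0]_(0 <= j < L2) a i j <=
  \big[Rplus/0]_(0 <= i < L1 + L2) \big[Rplus/0]_(0 <= j < L1 + L2 - i) a i j.
Proof.
move=> H; apply: Rle_trans (_ : _ <= \big[Rplus/0]_(0 <= i < L1)
     \big[Rplus/0]_(0 <= j < L1 + L2 - i) a i j) _.
  rewrite big_nat_cond [X in _ <= X]big_nat_cond; apply: bigR_le => i /andP [/andP [_ Hi] _].
  apply: bigR_prefix => //; rewrite leq_subRL; last by apply: leq_trans (ltnW Hi) (leq_addr _ _).
  by rewrite leq_add2r ltnW.
apply: bigR_prefix; first exact: leq_addr.
move=> i; apply: bigR_ge0 => j _; exact: H.
Qed.

Definition pairsum (Sigma : finType) (g1 g2 : seq Sigma -> nat) (F : seq Sigma -> R) (i j : nat) : R :=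
  \big[Rplus/0]_(s1 <- words Sigma i) \big[Rplus/0]_(s2 <- words Sigma j)
     (INR (g1 s1) * INR (g2 s2) * F (s1 ++ s2)).

Lemma pairsum_ge0 (Sigma : finType) g1 g2 (F : seq Sigma -> R) i j :
  (forall s, 0 <= F s) -> 0 <= pairsum g1 g2 F i j.
Proof.
move=> H; apply: bigR_ge0 => s1 _; apply: bigR_ge0 => s2 _.
apply: Rmult_le_pos => //; apply: Rmult_le_pos; exact: pos_INR.
Qed.

Lemma LS_cat (Sigma : finType) g1 g2 L (F : seq Sigma -> R) :
  LS (catcount g1 g2) L F =
  \big[Rplus/0]_(0 <= i < L) \big[Rplus/0]_(0 <= j < L - i) pairsum g1 g2 F i j.
Proof.
rewrite /LS -diag_reindex; apply: eq_bigr => n _; by rewrite catsum_n.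
Qed.

Lemma LS_nest (Sigma : finType) g1 g2 L1 L2 (F : seq Sigma -> R) :
  LS g1 L1 (fun s1 => LS g2 L2 (fun s2 => F (s1 ++ s2))) =
  \big[Rplus/0]_(0 <= i < L1) \big[Rplus/0]_(0 <= j < L2) pairsum g1 g2 F i j.
Proof.
rewrite /LS; apply: eq_bigr => i _; rewrite /pairsum.
rewrite (eq_bigr (fun s1 => \big[Rplus/0]_(0 <= j < L2) \big[Rplus/0]_(s2 <- words Sigma j)
           (INR (g1 s1) * INR (g2 s2) * F (s1 ++ s2)))); last first.
  move=> s1 _; rewrite big_distrr; apply: eq_bigr => j _; rewrite big_distrr.
  apply: eq_bigr => s2 _ /=; ring.
by rewrite exchange_big.
Qed.

Lemma LS_cat_le (Sigma : finType) g1 g2 L (F : seq Sigma -> R) : (forall s, 0 <= F s) ->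
  LS (catcount g1 g2) L F <= LS g1 L (fun s1 => LS g2 L (fun s2 => F (s1 ++ s2))).
Proof.
move=> H; rewrite LS_cat LS_nest; apply: diag_le1 => i j; exact: pairsum_ge0.
Qed.

Lemma LS_cat_ge (Sigma : finType) g1 g2 L1 L2 (F : seq Sigma -> R) : (forall s, 0 <= F s) ->
  LS g1 L1 (fun s1 => LS g2 L2 (fun s2 => F (s1 ++ s2))) <= LS (catcount g1 g2) (L1 + L2) F.
Proof.
move=> H; rewrite LS_cat LS_nest; apply: diag_le2 => i j; exact: pairsum_ge0.
Qed.

Definition fw (Sigma : finType) (D : nat) (A : Sigma -> mat D) (v : vec D) (Q : mat D)
  (s : seq Sigma) : R := qf (mtv (mps_word A s) v) Q.

Lemma fw_cat (Sigma : finType) (D : nat) (A : Sigma -> mat D) v Q s1 s2 :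
  fw A v Q (s1 ++ s2) = fw A (mtv (mps_word A s1) v) Q s2.
Proof. by rewrite /fw Aw_cat mtv_mmul. Qed.
Lemma fw_ge0 (Sigma : finType) (D : nat) (A : Sigma -> mat D) v Q s :
  PSD Q -> 0 <= fw A v Q s.
Proof. by move=> H; apply: H. Qed.
Lemma fw_nil (Sigma : finType) (D : nat) (A : Sigma -> mat D) v Q : fw A v Q [::] = qf v Q.
Proof. by rewrite /fw /= mtv_mid. Qed.
Lemma fw_chr (Sigma : finType) (D : nat) (A : Sigma -> mat D) v Q c :
  fw A v Q [:: c] = qf v (Er A (Chr c) Q).
Proof. by rewrite /fw /= mmul_mid_r qf_conj. Qed.

Lemma sum_ind (m L : nat) (x : R) :
  \big[Rplus/0]_(0 <= n < L) (if n == m then x else 0) = if (m < L)%N then x else 0.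
Proof.
elim: L => [|L IH]; first by rewrite big_geq.
rewrite big_nat_recr //= IH ltnS.
case: (ltngtP m L) => H; ring.
Qed.

Lemma LS_eps (Sigma : finType) L (F : seq Sigma -> R) :
  LS (fun s => nat_of_bool (s == [::])) L F = if (0 < L)%N then F [::] else 0.
Proof.
rewrite /LS -sum_ind; apply: eq_bigr => n _.
case: n => [|n].
  by rewrite /words /= big_cons big_nil /= Rplus_0_r Rmult_1_l.
rewrite big1_seq // => s /andP [_ Hs].
have := size_words Hs; case: s Hs => [|c s] //= _ _; rewrite Rmult_0_l //.
Qed.

Lemma LS_chr (Sigma : finType) L (F : seq Sigma -> R) c :
  LS (fun s => nat_of_bool (s == [:: c])) L F = if (1 < L)%N then F [:: c] else 0.
Proof.
rewrite /LS -sum_ind; apply: eq_bigr => n _.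
case: (boolP (n == 1%N)) => [/eqP -> | Hn].
  rewrite wordsS big_allpairs_dep (bigD1_seq c) ?mem_enum ?enum_uniq //=.
  rewrite big_cons big_nil eqxx /= Rmult_1_l Rplus_0_r big1 ?Rplus_0_r // => c' Hc'.
  rewrite big_cons big_nil /= Rplus_0_r.
  by rewrite (negbTE (_ : [:: c'] != [:: c])) ?Rmult_0_l //; rewrite eqseq_cons andbT.
rewrite big1_seq // => s /andP [_ Hs].
have := size_words Hs; case: s Hs => [|c0 [|c1 s]] //= _ Hsz.
- by rewrite Rmult_0_l.
- by move: Hn; rewrite -Hsz.
- by rewrite eqseq_cons /= andbF /= Rmult_0_l.
Qed.

Lemma LS_zero (Sigma : finType) L (F : seq Sigma -> R) : LS (fun _ => 0%N) L F = 0.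
Proof.
rewrite /LS big1 // => n _; rewrite big1 // => s _; by rewrite Rmult_0_l.
Qed.

Lemma LS_monoF_in (Sigma : finType) g L (F G : seq Sigma -> R) :
  (forall s, (size s < L)%N -> F s <= G s) -> LS g L F <= LS g L G.
Proof.
move=> H; rewrite /LS big_nat_cond [X in _ <= X]big_nat_cond.
apply: bigR_le => n /andP [/andP [_ Hn] _]; apply: bigR_le_seq => s Hs.
apply: Rmult_le_compat_l; first exact: pos_INR.
apply: H; by rewrite (size_words Hs).
Qed.

Lemma LS_gext (Sigma : finType) g g' L (F : seq Sigma -> R) :
  (forall s, g s = g' s) -> LS g L F = LS g' L F.
Proof. move=> H; rewrite /LS; apply: eq_bigr => n _; apply: eq_bigr => s _; by rewrite H. Qed.

Lemma unif (T : eqType) (l : seq T) (P : T -> nat -> nat -> Prop) :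
  (forall t k L k' L', (k <= k')%N -> (L <= L')%N -> P t k L -> P t k' L') ->
  (forall t, t \in l -> exists k L, P t k L) ->
  exists k L, forall t, t \in l -> P t k L.
Proof.
move=> Hm; elim: l => [|a l IH] H; first by exists 0%N, 0%N.
have [k1 [L1 H1]] := H a (mem_head _ _).
have [k2 [L2 H2]] : exists k L, forall t, t \in l -> P t k L.
  by apply: IH => t Ht; apply: H; rewrite inE Ht orbT.
exists (maxn k1 k2), (maxn L1 L2) => t; rewrite inE => /orP [/eqP -> | Ht].
  by apply: Hm H1; [exact: leq_maxl | exact: leq_maxl].
by apply: Hm (H2 t Ht); [exact: leq_maxr | exact: leq_maxr].
Qed.

Definition allw (Sigma : finType) (L : nat) : seq (seq Sigma) :=
  flatten [seq words Sigma i | i <- iota 0 L].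

Lemma allw_mem (Sigma : finType) L (s : seq Sigma) : (size s < L)%N -> s \in allw Sigma L.
Proof.
move=> H; apply/flatten_mapP; exists (size s); last exact: words_mem.
by rewrite mem_iota add0n.
Qed.

Lemma unifw (Sigma : finType) L (P : seq Sigma -> nat -> nat -> Prop) :
  (forall t k L k' L', (k <= k')%N -> (L <= L')%N -> P t k L -> P t k' L') ->
  (forall t, exists k L, P t k L) ->
  exists k L', forall t, (size t < L)%N -> P t k L'.
Proof.
move=> Hm H; have [k [L' HL]] := unif (l := allw Sigma L) Hm (fun t _ => H t).
exists k, L' => t Ht; apply: HL; exact: allw_mem.
Qed.

Lemma boundA (Sigma : finType) (D : nat) (A : Sigma -> mat D) r :
  Er_conv A r -> forall k L v Q, PSD Q -> LS (ck k r) L (fw A v Q) <= qf v (Er A r Q).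
Proof.
elim: r => [c|r1 IH1 r2 IH2|r1 IH1 r2 IH2|r1 IH1].
- move=> _ k L v Q HQ; rewrite (LS_gext (g' := fun s => nat_of_bool (s == [:: c]))); last first.
    by move=> s; rewrite ck_Chr.
  rewrite LS_chr -fw_chr; case: (1 < L)%N; [exact: Rle_refl | exact: fw_ge0].
- move=> [H1 H2] k L v Q HQ.
  rewrite (LS_gext (g' := catcount (ck k r1) (ck k r2))); last by move=> s; rewrite ck_Cat.
  apply: Rle_trans (LS_cat_le _ _ _ (fun s => fw_ge0 A v s HQ)) _.
  apply: Rle_trans (_ : _ <= LS (ck k r1) L (fw A v (Er A r2 Q))) _; last first.
    apply: IH1 => //; exact: Er_PSD.
  apply: LS_monoF => s1; rewrite (@LS_ext _ _ _ _ (fw A (mtv (mps_word A s1) v) Q)); last first.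
    by move=> s2; rewrite fw_cat.
  exact: IH2.
- move=> [H1 H2] k L v Q HQ /=; rewrite (LS_gext (g' := fun s => ck k r1 s + ck k r2 s)%N); last first.
    by move=> s; rewrite ck_Alt.
  rewrite LS_add qf_madd.
  have := IH1 H1 k L v Q HQ; have := IH2 H2 k L v Q HQ; lra.
- move=> Hc; have [H1 _] := Hc; move=> k L v Q HQ.
  elim: k v L => [|k IHk] v L.
    rewrite (LS_gext (g' := fun _ => 0%N)); last by move=> s; rewrite ck_Star0.
    rewrite LS_zero; exact: Er_PSD.
  rewrite (LS_gext (g' := fun s => nat_of_bool (s == [::]) + catcount (ck k.+1 r1) (ck k (Star r1)) s)%N); last first.
    by move=> s; rewrite ck_StarS.
  rewrite LS_add LS_eps (Er_star_fix Q Hc) qf_madd.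
  have He : (if (0 < L)%N then fw A v Q [::] else 0) <= qf v Q.
    case: (0 < L)%N; first by rewrite fw_nil; apply: Rle_refl.
    exact: HQ.
  suff : LS (catcount (ck k.+1 r1) (ck k (Star r1))) L (fw A v Q) <=
         qf v (Er A r1 (Er A (Star r1) Q)) by lra.
  apply: Rle_trans (LS_cat_le _ _ _ (fun s => fw_ge0 A v s HQ)) _.
  apply: Rle_trans (_ : _ <= LS (ck k.+1 r1) L (fw A v (Er A (Star r1) Q))) _; last first.
    apply: IH1 => //; exact: Er_PSD.
  apply: LS_monoF => s1; rewrite (@LS_ext _ _ _ _ (fw A (mtv (mps_word A s1) v) Q)); last first.
    by move=> s2; rewrite fw_cat.
  exact: IHk.
Qed.

Lemma LS_ck_mono (Sigma : finType) (D : nat) (A : Sigma -> mat D) r k k' L L' v Q :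
  PSD Q -> (k <= k')%N -> (L <= L')%N ->
  LS (ck k r) L (fw A v Q) <= LS (ck k' r) L' (fw A v Q).
Proof.
move=> HQ Hk HL; apply: Rle_trans (LS_monoL _ (fun s => fw_ge0 A v s HQ) HL).
apply: LS_monog => s; [exact: fw_ge0 | exact: ck_mono].
Qed.

Lemma catcount_mono (Sigma : Type) (g1 g2 g1' g2' : seq Sigma -> nat) s :
  (forall s, g1 s <= g1' s)%N -> (forall s, g2 s <= g2' s)%N ->
  (catcount g1 g2 s <= catcount g1' g2' s)%N.
Proof. move=> H1 H2; apply: leq_sum => i _; exact: leq_mul. Qed.

Lemma del_bound eps M : 0 < eps -> 0 <= M -> 0 < eps / (M + 1) /\ eps / (M + 1) * M <= eps.
Proof.
move=> He HM; have HM1 : 0 < M + 1 by lra.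
split; first by apply: Rdiv_lt_0_compat.
have E : eps / (M + 1) * (M + 1) = eps by field; lra.
have : 0 < eps / (M + 1) by apply: Rdiv_lt_0_compat.
nra.
Qed.

Lemma cat_lower (Sigma : finType) (D : nat) (A : Sigma -> mat D) (g1 g2 : seq Sigma -> nat)
  L1 L2 v (Q X : mat D) del :
  PSD Q ->
  (forall s1, (size s1 < L1)%N ->
     qf (mtv (mps_word A s1) v) X - del <= LS g2 L2 (fw A (mtv (mps_word A s1) v) Q)) ->
  LS g1 L1 (fw A v X) - del * LS g1 L1 (fun _ => 1) <= LS (catcount g1 g2) (L1 + L2) (fw A v Q).
Proof.
move=> HQ H; apply: Rle_trans (LS_cat_ge _ _ L1 L2 (fun s => fw_ge0 A v s HQ)).
have -> : LS g1 L1 (fw A v X) - del * LS g1 L1 (fun _ => 1) =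
          LS g1 L1 (fun s => 1 * fw A v X s + (- del) * 1).
  by rewrite LS_lin; ring.
apply: LS_monoF_in => s1 Hs1.
rewrite (@LS_ext _ _ _ _ (fw A (mtv (mps_word A s1) v) Q)); last by move=> s2; rewrite fw_cat.
have := H s1 Hs1; rewrite /fw; lra.
Qed.

Lemma Pm_PSD (Sigma : Type) (D : nat) (A : Sigma -> mat D) r1 Q n :
  Er_conv A r1 -> PSD Q -> PSD (Pm (Er A r1) Q n).
Proof.
move=> H1 HQ x; rewrite qf_Pm; apply: cond_pos_sum => k.
have : PSD (iter k (Er A r1) Q) by elim: k => [|k IH] //=; apply: Er_PSD.
by apply.
Qed.

Lemma boundB (Sigma : finType) (D : nat) (A : Sigma -> mat D) r :
  Er_conv A r -> forall Q, PSD Q -> forall v eps, 0 < eps ->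
  exists k L, qf v (Er A r Q) - eps <= LS (ck k r) L (fw A v Q).
Proof.
elim: r => [c|r1 IH1 r2 IH2|r1 IH1 r2 IH2|r1 IH1].
- move=> _ Q HQ v eps He; exists 0%N, 2%N.
  apply: Rle_trans (_ : _ <= INR (ck 0 (Chr c) [:: c]) * fw A v Q [:: c]) _.
    have -> : INR (ck 0 (Chr c) [:: c]) = 1 by rewrite ck_Chr eqxx.
    rewrite Rmult_1_l fw_chr; lra.
  apply: LS_single => // s; exact: fw_ge0.
- move=> [H1 H2] Q HQ v eps He.
  have HQ2 := Er_PSD H2 HQ.
  have [k1 [L1 HA]] := IH1 H1 (Er A r2 Q) HQ2 v (eps / 2) ltac:(lra).
  have HM : 0 <= LS (ck k1 r1) L1 (fun _ => 1) by apply: LS_ge0 => _; lra.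
  have [Hd Hd2] := del_bound (eps := eps / 2) ltac:(lra) HM.
  set del := eps / 2 / _ in Hd Hd2.
  have [k2 [L2 HB]] := unifw L1
    (P := fun s1 k L => qf (mtv (mps_word A s1) v) (Er A r2 Q) - del <=
                         LS (ck k r2) L (fw A (mtv (mps_word A s1) v) Q))
    (fun t k L k' L' Hk HL H => Rle_trans _ _ _ H (LS_ck_mono A r2 _ HQ Hk HL))
    (fun s1 => IH2 H2 Q HQ _ del Hd).
  exists (maxn k1 k2), (L1 + L2)%N.
  have Hc := cat_lower (ck k1 r1) (g2 := ck k2 r2) (L1 := L1) (L2 := L2) (v := v) (X := Er A r2 Q) HQ HB.
  apply: Rle_trans (_ : _ <= LS (catcount (ck k1 r1) (ck k2 r2)) (L1 + L2) (fw A v Q)) _.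
    have -> : Er A (Cat r1 r2) Q = Er A r1 (Er A r2 Q) by [].
    move: Hc Hd2 HA; generalize (del * LS (ck k1 r1) L1 (fun _ => 1)) => t h1 h2 h3.
    apply: Rle_trans _ h1; lra.
  rewrite (LS_gext (g := ck _ (Cat r1 r2)) (g' := catcount (ck (maxn k1 k2) r1) (ck (maxn k1 k2) r2))); last first.
    by move=> s; rewrite ck_Cat.
  apply: LS_monog => s; first exact: fw_ge0.
  apply: catcount_mono => s'; apply: ck_mono; [exact: leq_maxl | exact: leq_maxr].
- move=> [H1 H2] Q HQ v eps He.
  have [k1 [L1 HA]] := IH1 H1 Q HQ v (eps / 2) ltac:(lra).
  have [k2 [L2 HB]] := IH2 H2 Q HQ v (eps / 2) ltac:(lra).
  exists (maxn k1 k2), (maxn L1 L2).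
  rewrite (LS_gext (g' := fun s => ck (maxn k1 k2) r1 s + ck (maxn k1 k2) r2 s)%N); last first.
    by move=> s; rewrite ck_Alt.
  rewrite LS_add /= qf_madd.
  have := LS_ck_mono A r1 v HQ (leq_maxl k1 k2) (leq_maxl L1 L2).
  have := LS_ck_mono A r2 v HQ (leq_maxr k1 k2) (leq_maxr L1 L2).
  lra.
- move=> Hc Q HQ v eps He; have [H1 _] := Hc.
  have Hclaim : forall n v eps, 0 < eps -> exists k L,
      qf v (Pm (Er A r1) Q n) - eps <= LS (ck k (Star r1)) L (fw A v Q).
    elim=> [|n IHn] v' eps' He'.
      exists 1%N, 1%N.
      apply: Rle_trans (_ : _ <= INR (ck 1 (Star r1) [::]) * fw A v' Q [::]) _; last first.
        apply: LS_single => // s; exact: fw_ge0.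
      have H1le : 1 <= INR (ck 1 (Star r1) [::]).
        apply: Rle_trans (Req_le _ _ (erefl : 1 = INR 1)) _; apply: le_INR; apply/leP.
        rewrite ck_StarS; exact: leq_addr.
      rewrite fw_nil; have := HQ v'; have -> : Pm (Er A r1) Q 0 = Q by [].
      nra.
    have [_ Hs] := Er_lin H1.
    have HPn := Pm_PSD n H1 HQ.
    have [k1 [L1 HA]] := IH1 H1 (Pm (Er A r1) Q n) HPn v' (eps' / 2) ltac:(lra).
    have HM : 0 <= LS (ck k1 r1) L1 (fun _ => 1) by apply: LS_ge0 => _; lra.
    have [Hd Hd2] := del_bound (eps := eps' / 2) ltac:(lra) HM.
    set del := eps' / 2 / _ in Hd Hd2.
    have [k2 [L2 HB]] := unifw L1
      (P := fun s1 k L => qf (mtv (mps_word A s1) v') (Pm (Er A r1) Q n) - del <=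
                           LS (ck k (Star r1)) L (fw A (mtv (mps_word A s1) v') Q))
      (fun t k L k' L' Hk HL H => Rle_trans _ _ _ H (LS_ck_mono A (Star r1) _ HQ Hk HL))
      (fun s1 => IHn _ del Hd).
    exists (maxn k1 k2).+1, (L1 + L2).+1.
    have Hcl := cat_lower (ck k1 r1) (g2 := ck k2 (Star r1)) (L1 := L1) (L2 := L2) (v := v')
                  (X := Pm (Er A r1) Q n) HQ HB.
    rewrite (LS_gext (g' := fun s => nat_of_bool (s == [::]) +
         catcount (ck (maxn k1 k2).+1 r1) (ck (maxn k1 k2) (Star r1)) s)%N); last first.
      by move=> s; rewrite ck_StarS.
    rewrite LS_add LS_eps.
    have -> : (if (0 < (L1 + L2).+1)%N then fw A v' Q [::] else 0) = qf v' Q by rewrite fw_nil.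
    rewrite Pm_S; last by have [Ha _] := Er_lin H1.
    rewrite qf_madd.
    have Hmono : LS (catcount (ck k1 r1) (ck k2 (Star r1))) (L1 + L2) (fw A v' Q) <=
                 LS (catcount (ck (maxn k1 k2).+1 r1) (ck (maxn k1 k2) (Star r1))) (L1 + L2).+1 (fw A v' Q).
      apply: Rle_trans (LS_monoL _ (fun s => fw_ge0 A v' s HQ) (leqnSn _)).
      apply: LS_monog => s; first exact: fw_ge0.
      apply: catcount_mono => s'; apply: ck_mono; last exact: leq_maxr.
      exact: leq_trans (leq_maxl k1 k2) (leqnSn _).
    have Hfin := Rle_trans _ _ _ Hcl Hmono.
    move: Hfin Hd2 HA; generalize (del * LS (ck k1 r1) L1 (fun _ => 1)) => t h1 h2 h3.
    lra.
  have Hcv := qf_cv v (M := Pm (Er A r1) Q) (L := Er A (Star r1) Q)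
                 (fun i j => @Er_star_cv _ _ _ _ Q i j Hc).
  have [N HN] := Hcv (eps / 2) ltac:(lra).
  have [k [L HkL]] := Hclaim N v (eps / 2) ltac:(lra).
  exists k, L.
  have := HN N (le_n N); rewrite /R_dist => /Rabs_def2 [Ha Hb].
  lra.
Qed.

Lemma samp_Chr (Sigma : finType) (D : nat) (A : Sigma -> mat D) k c Ql Qr s :
  samp A k (Chr c) Ql Qr s = if s == [:: c] then 1 else 0.
Proof. by case: k. Qed.
Lemma samp_Cat (Sigma : finType) (D : nat) (A : Sigma -> mat D) k r1 r2 Ql Qr s :
  samp A k (Cat r1 r2) Ql Qr s =
  \big[Rplus/0]_(i < (size s).+1)
    (samp A k r1 Ql (Er A r2 Qr) (take i s) * samp A k r2 (El_word A (take i s) Ql) Qr (drop i s)).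
Proof. by case: k. Qed.
Lemma samp_Alt (Sigma : finType) (D : nat) (A : Sigma -> mat D) k r1 r2 Ql Qr s :
  samp A k (Alt r1 r2) Ql Qr s =
  ZR A r1 Ql Qr / ZR A (Alt r1 r2) Ql Qr * samp A k r1 Ql Qr s
  + ZR A r2 Ql Qr / ZR A (Alt r1 r2) Ql Qr * samp A k r2 Ql Qr s.
Proof. by case: k. Qed.
Lemma samp_Star0 (Sigma : finType) (D : nat) (A : Sigma -> mat D) r1 Ql Qr s :
  samp A 0 (Star r1) Ql Qr s = 0.
Proof. by []. Qed.
Lemma samp_StarS (Sigma : finType) (D : nat) (A : Sigma -> mat D) k r1 Ql Qr s :
  samp A k.+1 (Star r1) Ql Qr s =
  trace (mmul Ql Qr) / ZR A (Star r1) Ql Qr * (if s is [::] then 1 else 0)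
  + (1 - trace (mmul Ql Qr) / ZR A (Star r1) Ql Qr) *
    \big[Rplus/0]_(i < (size s).+1)
      (samp A k.+1 r1 Ql (Er A (Star r1) Qr) (take i s)
       * samp A k (Star r1) (El_word A (take i s) Ql) Qr (drop i s)).
Proof. by []. Qed.

Lemma single_bound (Sigma : finType) (D : nat) (A : Sigma -> mat D) r k v Q s :
  Er_conv A r -> PSD Q -> INR (ck k r s) * fw A v Q s <= qf v (Er A r Q).
Proof.
move=> Hc HQ; apply: Rle_trans (boundA Hc k (size s).+1 v HQ).
apply: LS_single => // s'; exact: fw_ge0.
Qed.

Lemma zero_case (Sigma : finType) (D : nat) (A : Sigma -> mat D) r k v Q s :
  Er_conv A r -> PSD Q -> qf v (Er A r Q) = 0 -> INR (ck k r s) * fw A v Q s = 0.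
Proof.
move=> Hc HQ H0; have := single_bound k v s Hc HQ.
have := Rmult_le_pos _ _ (pos_INR (ck k r s)) (fw_ge0 A v s HQ); lra.
Qed.

Lemma samp_inv (Sigma : finType) (D : nat) (A : Sigma -> mat D) r :
  Er_conv A r -> forall k v Qr s, PSD Qr ->
  qf v (Er A r Qr) * samp A k r (outer v) Qr s = INR (ck k r s) * fw A v Qr s.
Proof.
elim: r => [c|r1 IH1 r2 IH2|r1 IH1 r2 IH2|r1 IH1].
- move=> _ k v Qr s HQ; rewrite samp_Chr ck_Chr.
  case: (boolP (s == [:: c])) => Hs; rewrite ?Hs ?(negbTE Hs).
    by move/eqP: Hs => ->; rewrite fw_chr /=; ring.
  rewrite /=; ring.
- move=> [H1 H2] k v Qr s HQ; rewrite samp_Cat ck_Cat big_mkord INR_big big_distrr big_distrl.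
  apply: eq_bigr => i _ /=.
  have HQ2 := Er_PSD H2 HQ.
  rewrite -Rmult_assoc IH1 // El_outer INR_muln.
  have -> : fw A v Qr s = fw A (mtv (mps_word A (take i s)) v) Qr (drop i s).
    by rewrite -fw_cat cat_take_drop.
  have -> : fw A v (Er A r2 Qr) (take i s) = qf (mtv (mps_word A (take i s)) v) (Er A r2 Qr) by [].
  rewrite Rmult_assoc IH2 //; ring.
- move=> [H1 H2] k v Qr s HQ; rewrite samp_Alt ck_Alt INR_addn /ZR !trace_outer.
  have EA : Er A (Alt r1 r2) Qr = madd (Er A r1 Qr) (Er A r2 Qr) by [].
  case: (Req_dec (qf v (Er A (Alt r1 r2) Qr)) 0) => Hz.
    have := zero_case (r := Alt r1 r2) k s (conj H1 H2) HQ Hz.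
    rewrite ck_Alt INR_addn Hz => ->; ring.
  have E1 := IH1 H1 k v Qr s HQ; have E2 := IH2 H2 k v Qr s HQ.
  rewrite EA qf_madd in Hz *.
  rewrite [RHS]Rmult_plus_distr_r -E1 -E2; field; exact: Hz.
- move=> Hc; have [H1 _] := Hc.
  move=> k; elim: k => [|k IHk] v Qr s HQ.
    by rewrite samp_Star0 ck_Star0 /=; ring.
  rewrite samp_StarS /ZR !trace_outer.
  case: (Req_dec (qf v (Er A (Star r1) Qr)) 0) => Hz.
    by rewrite Hz (zero_case k.+1 s Hc HQ Hz); ring.
  have Hfix := Er_star_fix Qr Hc.
  have HZ : qf v (Er A (Star r1) Qr) = qf v Qr + qf v (Er A r1 (Er A (Star r1) Qr)).
    by rewrite {1}Hfix qf_madd.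
  have HQs := Er_PSD Hc HQ.
  have -> : qf v (Er A (Star r1) Qr) *
     (qf v Qr / qf v (Er A (Star r1) Qr) * (if s is [::] then 1 else 0) +
      (1 - qf v Qr / qf v (Er A (Star r1) Qr)) *
      \big[Rplus/0]_(i < (size s).+1)
         (samp A k.+1 r1 (outer v) (Er A (Star r1) Qr) (take i s) *
          samp A k (Star r1) (El_word A (take i s) (outer v)) Qr (drop i s))) =
     qf v Qr * (if s is [::] then 1 else 0) +
     qf v (Er A r1 (Er A (Star r1) Qr)) *
      \big[Rplus/0]_(i < (size s).+1)
         (samp A k.+1 r1 (outer v) (Er A (Star r1) Qr) (take i s) *
          samp A k (Star r1) (El_word A (take i s) (outer v)) Qr (drop i s)).
    rewrite HZ; field; rewrite -HZ; exact: Hz.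
  rewrite ck_StarS INR_addn Rmult_plus_distr_r; congr (_ + _).
    case: s => [|c s] /=; last by ring.
    by rewrite fw_nil; ring.
  rewrite big_mkord INR_big big_distrr big_distrl; apply: eq_bigr => i _.
  suff E : qf v (Er A r1 (Er A (Star r1) Qr)) *
     (samp A k.+1 r1 (outer v) (Er A (Star r1) Qr) (take i s) *
      samp A k (Star r1) (El_word A (take i s) (outer v)) Qr (drop i s)) =
     INR (ck k.+1 r1 (take i s) * ck k (Star r1) (drop i s)) * fw A v Qr s by exact: E.
  rewrite -Rmult_assoc IH1 // El_outer INR_muln.
  have -> : fw A v Qr s = fw A (mtv (mps_word A (take i s)) v) Qr (drop i s).
    by rewrite -fw_cat cat_take_drop.
  have -> : fw A v (Er A (Star r1) Qr) (take i s) =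
            qf (mtv (mps_word A (take i s)) v) (Er A (Star r1) Qr) by [].
  rewrite Rmult_assoc IHk //; ring.
Qed.

Lemma fw_amp (Sigma : finType) (D : nat) (A : Sigma -> mat D) alpha omega s :
  fw A alpha (outer omega) s = amp A alpha omega s ^ 2.
Proof. by rewrite /fw qf_outer amp_eq. Qed.

Lemma sum_f_R0_big (f : nat -> R) N :
  sum_f_R0 f N = \big[Rplus/0]_(0 <= n < N.+1) f n.
Proof.
elim: N => [|N IH]; first by rewrite big_nat1.
by rewrite big_nat_recr //= IH.
Qed.

Lemma cv_eventually (u : nat -> R) l : (exists K, forall k, (K <= k)%N -> u k = l) -> Un_cv u l.
Proof.
move=> [K HK] e He; exists K => n Hn; rewrite HK; last by apply/leP.
rewrite /R_dist Rminus_diag Rabs_R0; lra.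
Qed.

Lemma len_mass_scal (Sigma : finType) (P : seq Sigma -> Prop) (f : seq Sigma -> R) c n :
  c <> 0 -> c * len_mass P (fun s => f s / c) n = len_mass P f n.
Proof.
move=> Hc; rewrite /len_mass big_distrr; apply: eq_bigr => w _ /=.
case: (excluded_middle_informative (P w)) => Hw /=; [field; exact: Hc | ring].
Qed.

Lemma len_mass_ge0 (Sigma : finType) (P : seq Sigma -> Prop) (f : seq Sigma -> R) n :
  (forall s, 0 <= f s) -> 0 <= len_mass P f n.
Proof.
move=> H; rewrite /len_mass; apply: bigR_ge0 => w _.
case: (excluded_middle_informative (P w)) => Hw /=; [exact: H | lra].
Qed.

Theorem theorem1 (Sigma : finType) (D : nat) (A : Sigma -> mat D) (alpha omega : vec D)
  (Zs : R) (r : regex Sigma) (PR : R) :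
  infinite_sum (len_mass (fun _ => True) (fun s => (amp A alpha omega s ^ 2)%R)) Zs ->
  (0 < Zs)%R ->
  unambiguous r ->
  Er_conv A r ->
  infinite_sum (len_mass (inL r) (fun s => (amp A alpha omega s ^ 2 / Zs)%R)) PR ->
  (0 < PR)%R ->
  forall s : seq Sigma,
    Un_cv (fun k => samp A k r (outer alpha) (outer omega) s)
      (if excluded_middle_informative (inL r s)
       then (amp A alpha omega s ^ 2 / Zs / PR)%R else 0%R).
Proof.
move=> _ HZs Hu Hc HPR HPRpos s.
have HQ := PSD_outer omega.
set Z := qf alpha (Er A r (outer omega)).
set p := len_mass (inL r) (fun s => amp A alpha omega s ^ 2 / Zs).
have Hp : forall n, 0 <= p n.
  move=> n; apply: len_mass_ge0 => s'; apply: Rmult_le_pos; [exact: pow2_ge_0 | left; exact: Rinv_0_lt_compat].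
have HPRcv : Un_cv (sum_f_R0 p) PR by [].
have Hck1 : forall k s', (ck k r s' <= 1)%N.
  move=> k s'; apply: leq_trans (ck_le_cnt _ _ (leqnn k)) _; exact: Hu.
have Hword_up : forall k s', INR (ck k r s') * fw A alpha (outer omega) s' <=
    Zs * (if excluded_middle_informative (inL r s') then amp A alpha omega s' ^ 2 / Zs else 0).
  move=> k s'; rewrite fw_amp; case: (excluded_middle_informative (inL r s')) => Hin /=.
    have -> : Zs * (amp A alpha omega s' ^ 2 / Zs) = amp A alpha omega s' ^ 2 by field; lra.
    have : INR (ck k r s') <= 1.
      apply: Rle_trans (Req_le _ _ (erefl : INR 1 = 1)); apply: le_INR; apply/leP; exact: Hck1.
    have := pow2_ge_0 (amp A alpha omega s'); have := pos_INR (ck k r s'); nra.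
  have [_ H0] := ck_limit s' Hu; rewrite (H0 Hin k) /=; lra.
have HLS_up : forall k L, LS (ck k r) L (fw A alpha (outer omega)) <= Zs * PR.
  move=> k [|L].
    rewrite /LS big_geq //; apply: Rmult_le_pos; lra.
  apply: Rle_trans (_ : _ <= Zs * sum_f_R0 p L) _; last first.
    apply: Rmult_le_compat_l; first lra.
    exact: sum_incr HPRcv Hp.
  rewrite sum_f_R0_big /LS big_distrr; apply: bigR_le => n _.
  rewrite /p /len_mass big_distrr; apply: bigR_le => w _; exact: Hword_up.
have HZle : Z <= Zs * PR.
  apply: Rnot_lt_le => Hlt.
  have [k [L HkL]] := boundB Hc HQ alpha (eps := (Z - Zs * PR) / 2) ltac:(lra).
  have := HLS_up k L; rewrite -/Z in HkL; lra.
have HZge : Zs * PR <= Z.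
  have HN : forall N, Zs * sum_f_R0 p N <= Z.
    move=> N.
    have Hex : forall w, exists k (L : nat), (inL r w -> (1 <= ck k r w)%N).
      move=> w; have [HK _] := ck_limit w Hu; case: (classic (inL r w)) => Hw.
      - have [K HKk] := HK Hw; exists K, 0%N => _; by rewrite HKk.
      - by exists 0%N, 0%N.
    have [k [L' HkL]] := unifw N.+1 (P := fun w k (L : nat) => inL r w -> (1 <= ck k r w)%N)
      (fun t k L k' L' Hk HL H Hin => leq_trans (H Hin) (ck_mono _ _ Hk)) Hex.
    apply: Rle_trans (boundA Hc k N.+1 alpha HQ); rewrite -/Z.
    rewrite sum_f_R0_big /LS big_distrr big_nat_cond [X in _ <= X]big_nat_cond.
    apply: bigR_le => n /andP [/andP [_ Hn] _].
    rewrite /p /len_mass big_distrr; apply: bigR_le_seq => w Hw.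
    rewrite fw_amp; case: (excluded_middle_informative (inL r w)) => Hin /=.
      have Hsz : (size w < N.+1)%N by rewrite (size_words Hw).
      have H1 : 1 <= INR (ck k r w).
        apply: Rle_trans (Req_le _ _ (erefl : 1 = INR 1)) _; apply: le_INR; apply/leP.
        exact: HkL.
      have -> : Zs * (amp A alpha omega w ^ 2 / Zs) = amp A alpha omega w ^ 2 by field; lra.
      have := pow2_ge_0 (amp A alpha omega w); nra.
    rewrite Rmult_0_r; apply: Rmult_le_pos; [exact: pos_INR | exact: pow2_ge_0].
  exact: Rle_cv_lim HN (cv_scal Zs HPRcv) (cv_const Z).
have HZ : Z = Zs * PR by lra.
have HZpos : 0 < Z by rewrite HZ; apply: Rmult_lt_0_compat.
have Hsamp : forall k, samp A k r (outer alpha) (outer omega) s =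
                       INR (ck k r s) * amp A alpha omega s ^ 2 / Z.
  move=> k; have := samp_inv Hc k alpha s HQ; rewrite -/Z fw_amp => E.
  apply: (Rmult_eq_reg_l Z); last lra.
  rewrite E; field; lra.
apply: cv_eventually.
case: (excluded_middle_informative (inL r s)) => Hin.
  have [HK _] := ck_limit s Hu; have [K HKk] := HK Hin.
  exists K => k Hk; rewrite Hsamp HKk // HZ /=; field; lra.
exists 0%N => k _; have [_ H0] := ck_limit s Hu; rewrite Hsamp (H0 Hin k) /=; field; lra.
Qed.
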